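(* Let $\succeq$ be a preference order on $\mathcal L^\infty(\Omega,\mathcal F)$ satisfying (SM), (PC) and (ST), let $\mathcal G\subseteq\mathcal F$ be a sub-$\sigma$-algebra and $f\in\mathcal L^\infty(\Omega,\mathcal F)$. Then $\mathfrak m(f\mid\mathcal G)\neq\varnothing$, and for any $g,\tilde g\in\mathfrak m(f\mid\mathcal G)$ one has $\{g\neq\tilde g\}\in\mathcal N_\succeq$.
   Context: $\mathcal L^\infty(\Omega,\mathcal F)$: bounded $\mathcal F$-measurable real functions. Preference order: complete transitive relation; $\succ,\sim$ as usual. Null events $\mathcal N_\succeq=\{A\in\mathcal F: f1_A+g1_{A^c}\sim g\ \forall f,g\}$. (SM): for $A\notin\mathcal N_\succeq$, every $f$ and constants $x>y$: $x1_A+f1_{A^c}\succ y1_A+f1_{A^c}$. (ST): if $f1_A+h1_{A^c}\succeq g1_A+h1_{A^c}$ then $f1_A+\tilde h1_{A^c}\succeq g1_A+\tilde h1_{A^c}$ for every $\tilde h$. (PC): for uniformly bounded $f_n\to f$ pointwise and $g\succ f$ (resp. $f\succ g$) there is $N$ with $g\succ f_n$ (resp. $f_n\succ g$) for $n>N$. Conditional Chisini mean: $\mathfrak m(f\mid\mathcal G)=\{g\in\mathcal L^\infty(\Omega,\mathcal G): f1_A\sim g1_A\ \forall A\in\mathcal G\}$. *)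

(* Defs.v *)
From HB Require Import structures.
From mathcomp Require Import all_boot all_order all_algebra.
From mathcomp Require Import all_classical all_reals all_analysis.
Set Implicit Arguments. Unset Strict Implicit. Unset Printing Implicit Defensive.
Import Order.TTheory GRing.Theory Num.Theory numFieldNormedType.Exports.
Local Open Scope classical_set_scope.
Local Open Scope ring_scope.

Section Chisini.
Context {R : realType} {Omega : Type}.

Definition measurable_wrt (F : set (set Omega)) (f : Omega -> R) : Prop :=
  forall B : set R, @measurable _ (measurableTypeR R) B -> F (f @^-1` B).

Definition Linf (F : set (set Omega)) (f : Omega -> R) : Prop :=
  measurable_wrt F f /\ exists M : R, forall w, `|f w| <= M.

Definition glue (f : Omega -> R) (A : set Omega) (g : Omega -> R) : Omega -> R :=
  fun w => f w * \1_A w + g w * \1_(~` A) w.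

Definition cst (x : R) : Omega -> R := fun _ => x.

Section Pref.
Variables (F : set (set Omega)) (pref : (Omega -> R) -> (Omega -> R) -> Prop).

Definition pref_sim f g := pref f g /\ pref g f.
Definition pref_strict f g := pref f g /\ ~ pref g f.

Definition preference_order : Prop :=
  (forall f g, Linf F f -> Linf F g -> pref f g \/ pref g f) /\
  (forall f g h, Linf F f -> Linf F g -> Linf F h ->
     pref f g -> pref g h -> pref f h).

Definition null_events : set (set Omega) :=
  [set A | F A /\ forall f g, Linf F f -> Linf F g ->
                   pref_sim (glue f A g) g].

Definition SM : Prop :=
  forall A, F A -> ~ null_events A ->
  forall f (x y : R), Linf F f -> x > y ->
    pref_strict (glue (cst x) A f) (glue (cst y) A f).

Definition ST : Prop :=
  forall A f g h h', F A -> Linf F f -> Linf F g -> Linf F h -> Linf F h' ->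
    pref (glue f A h) (glue g A h) -> pref (glue f A h') (glue g A h').

Definition PC : Prop :=
  forall (fs : nat -> Omega -> R) (f g : Omega -> R),
    (forall n, Linf F (fs n)) -> Linf F f -> Linf F g ->
    (exists M : R, forall n w, `|fs n w| <= M) ->
    (forall w, (fun n => fs n w) @ \oo --> f w) ->
    (pref_strict g f -> exists N, forall n, (N < n)%N -> pref_strict g (fs n)) /\
    (pref_strict f g -> exists N, forall n, (N < n)%N -> pref_strict (fs n) g).

Definition chisini_mean (f : Omega -> R) (G : set (set Omega)) : set (Omega -> R) :=
  [set g | Linf G g /\
     forall A, G A -> pref_sim (f \* \1_A) (g \* \1_A)].

End Pref.
End Chisini.

(* Main.v *)
Require Import Defs.
From HB Require Import structures.
From mathcomp Require Import all_boot all_order all_algebra.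
From mathcomp Require Import all_classical all_reals all_analysis.
From mathcomp Require Import measurable_realfun.
Import Order.TTheory GRing.Theory Num.Theory numFieldNormedType.Exports.
Local Open Scope classical_set_scope.
Local Open Scope ring_scope.
Local Notation glue := Defs.glue.
Set Implicit Arguments. Unset Strict Implicit. Unset Printing Implicit Defensive.

Section Meas.
Variables (R : realType) (Omega : Type) (w0 : Omega).
Definition OT (_ : Omega) : Type := Omega.
HB.instance Definition _ := gen_eqMixin (OT w0).
HB.instance Definition _ := gen_choiceMixin (OT w0).
HB.instance Definition _ := isPointed.Build (OT w0) w0.

Lemma mwE (H : set (set Omega)) (sH : sigma_algebra setT H) (f : Omega -> R) :
  measurable_wrt H f <->
  measurable_fun setT (f : g_sigma_algebraType (H : set (set (OT w0))) -> R).
Proof.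
split.
- move=> mf _ B mB; rewrite setTI.
  rewrite /measurable /=. rewrite (sigma_algebra_id sH). exact: mf.
- move=> mf B mB; have := mf measurableT B mB; rewrite setTI.
  rewrite /measurable /=. by rewrite (sigma_algebra_id sH).
Qed.

Lemma measE (H : set (set Omega)) (sH : sigma_algebra setT H) (A : set Omega) :
  H A <-> @measurable _ (g_sigma_algebraType (H : set (set (OT w0)))) A.
Proof. by rewrite /measurable /= (sigma_algebra_id sH). Qed.

End Meas.

Section LinfS.
Variables (R : realType) (Omega : Type) (w0 : Omega).
Variables (H : set (set Omega)) (sH : sigma_algebra setT H).
Local Notation MT := (g_sigma_algebraType (H : set (set (OT w0)))).

Lemma glueE (f : Omega -> R) A g w : glue f A g w = if w \in A then f w else g w.
Proof.
rewrite /glue !indicE in_setC; case: (w \in A) => /=.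
  by rewrite mulr1 mulr0 addr0.
by rewrite mulr0 mulr1 add0r.
Qed.

Lemma Linf_meas (f : Omega -> R) : Linf H f -> measurable_fun setT (f : MT -> R).
Proof. by case=> /(mwE w0 sH). Qed.

Lemma Linf_of (f : Omega -> R) M : measurable_fun setT (f : MT -> R) ->
  (forall w, `|f w| <= M) -> Linf H f.
Proof. by move=> mf fM; split; [exact/(mwE w0 sH)|exists M]. Qed.

Lemma Linf_cst (x : R) : Linf H (cst x).
Proof. by apply: (@Linf_of _ `|x|) => //; exact: measurable_cst. Qed.

Lemma Linf_glue (f : Omega -> R) A g : H A -> Linf H f -> Linf H g -> Linf H (glue f A g).
Proof.
move=> HA Lf Lg; have [_ [M1 hM1]] := Lf; have [_ [M2 hM2]] := Lg.
apply: (@Linf_of _ (Num.max M1 M2)).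
  rewrite /glue; apply: measurable_funD; apply: measurable_funM.
  - exact: Linf_meas.
  - by apply: measurable_indic; apply/(measE w0 sH).
  - exact: Linf_meas.
  - apply: measurable_indic; apply: measurableC; exact/(measE w0 sH).
move=> w; rewrite glueE; case: (w \in A); rewrite le_max ?hM1 ?hM2 ?orbT //.
Qed.

Lemma Linf_D (f g : Omega -> R) : Linf H f -> Linf H g -> Linf H (f \+ g).
Proof.
move=> Lf Lg; have [_ [M1 hM1]] := Lf; have [_ [M2 hM2]] := Lg.
apply: (@Linf_of _ (M1 + M2)).
  by apply: measurable_funD; exact: Linf_meas.
by move=> w /=; rewrite (le_trans (ler_normD _ _)) // lerD.
Qed.

Lemma Linf_M (f g : Omega -> R) : Linf H f -> Linf H g -> Linf H (f \* g).
Proof.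
move=> Lf Lg; have [_ [M1 hM1]] := Lf; have [_ [M2 hM2]] := Lg.
apply: (@Linf_of _ (M1 * M2)).
  by apply: measurable_funM; exact: Linf_meas.
move=> w /=; rewrite normrM ler_pM //.
Qed.

Lemma Linf_ind (A : set Omega) : H A -> Linf H (\1_A : Omega -> R).
Proof.
move=> HA; apply: (@Linf_of _ 1).
  by apply: measurable_indic; apply/(measE w0 sH).
by move=> w; rewrite indicE; case: (w \in A); rewrite ?normr1 ?normr0.
Qed.

Lemma Linf_max (f g : Omega -> R) : Linf H f -> Linf H g -> Linf H (f \max g).
Proof.
move=> Lf Lg; have [_ [M1 hM1]] := Lf; have [_ [M2 hM2]] := Lg.
apply: (@Linf_of _ (Num.max M1 M2)).
  by apply: measurable_maxr; exact: Linf_meas.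
move=> w /=; rewrite /Order.max; case: ifP => _; rewrite le_max ?hM1 ?hM2 ?orbT //.
Qed.

Lemma Linf_min (f g : Omega -> R) : Linf H f -> Linf H g -> Linf H (f \min g).
Proof.
move=> Lf Lg; have [_ [M1 hM1]] := Lf; have [_ [M2 hM2]] := Lg.
apply: (@Linf_of _ (Num.max M1 M2)).
  by apply: measurable_minr; exact: Linf_meas.
move=> w /=; rewrite /Order.min; case: ifP => _; rewrite le_max ?hM1 ?hM2 ?orbT //.
Qed.

Lemma Linf_lim (fs : nat -> Omega -> R) (f : Omega -> R) M :
  (forall n, Linf H (fs n)) -> (forall w, `|f w| <= M) ->
  (forall w, (fun n => fs n w) @ \oo --> f w) -> Linf H f.
Proof.
move=> Lfs fM cv; apply: (@Linf_of _ M) => //.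
apply: (@measurable_fun_cvg _ MT R setT fs f) => [n|w _]; last exact: cv.
exact: Linf_meas.
Qed.

Lemma H_pos (f : Omega -> R) : Linf H f -> H [set w | 0 < f w].
Proof.
case=> mf _; have := mf `]0, +oo[%classic (measurable_itv _).
by congr H; apply/seteqP; split=> w /=; rewrite in_itv /= andbT.
Qed.

Lemma H_lt (f g : Omega -> R) : Linf H f -> Linf H g -> H [set w | f w < g w].
Proof.
move=> Lf Lg; have Lm : Linf H (g \+ (\- f)).
  apply: Linf_D => //; have [_ [M hM]] := Lf; apply: (@Linf_of _ M).
    by apply: measurable_funN; exact: Linf_meas.
  by move=> w /=; rewrite normrN.
have := H_pos Lm; congr H; apply/seteqP; split=> w /=; by rewrite subr_gt0.
Qed.

Lemma H_neq (f g : Omega -> R) : Linf H f -> Linf H g -> H [set w | f w != g w].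
Proof.
move=> Lf Lg; have -> : [set w | f w != g w] = [set w | f w < g w] `|` [set w | g w < f w].
  by apply/seteqP; split=> w /=; rewrite neq_lt => /orP.
by apply/(measE w0 sH); apply: measurableU; apply/(measE w0 sH); exact: H_lt.
Qed.

Lemma H_I A B : H A -> H B -> H (A `&` B).
Proof. by move=> /(measE w0 sH) ? /(measE w0 sH) ?; apply/(measE w0 sH); exact: measurableI. Qed.
Lemma H_U A B : H A -> H B -> H (A `|` B).
Proof. by move=> /(measE w0 sH) ? /(measE w0 sH) ?; apply/(measE w0 sH); exact: measurableU. Qed.
Lemma H_C A : H A -> H (~` A).
Proof. by move=> /(measE w0 sH) ?; apply/(measE w0 sH); exact: measurableC. Qed.
Lemma H_D A B : H A -> H B -> H (A `\` B).
Proof. by move=> /(measE w0 sH) ? /(measE w0 sH) ?; apply/(measE w0 sH); exact: measurableD. Qed.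
Lemma H_T : H setT.
Proof. by apply/(measE w0 sH); exact: measurableT. Qed.
Lemma H_0 : H set0.
Proof. by apply/(measE w0 sH); exact: measurable0. Qed.
Lemma H_bigcup (A : nat -> set Omega) : (forall n, H (A n)) -> H (\bigcup_n A n).
Proof.
move=> hA; apply/(measE w0 sH); apply: bigcupT_measurable => n; exact/(measE w0 sH).
Qed.

End LinfS.


Lemma cvg_ev (R : realType) (u : nat -> R) c N :
  (forall n, (N <= n)%N -> u n = c) -> u @ \oo --> c.
Proof. move=> h; apply: cvg_near_cst; exists N => // n /= Nn; exact: h. Qed.

Section Pref.
Variables (R : realType) (Omega : Type) (w0 : Omega).
Variables (F : set (set Omega)) (sF : sigma_algebra setT F).
Variable pref : (Omega -> R) -> (Omega -> R) -> Prop.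
Hypotheses (PO : preference_order F pref) (HSM : SM F pref) (HPC : PC F pref) (HST : ST F pref).
Local Notation L := (@Linf R Omega F).
Local Notation psim := (pref_sim pref).
Local Notation pstr := (pref_strict pref).
Local Notation null := (null_events F pref).

Lemma LG (f : Omega -> R) A g : F A -> L f -> L g -> L (glue f A g).
Proof. move=> a b c; exact: (@Linf_glue R Omega w0 F sF f A g a b c). Qed.
Lemma LC (x : R) : L (cst x).
Proof. exact: (@Linf_cst R Omega w0 F sF x). Qed.
Hint Resolve LC : core.

Lemma prefl f : L f -> pref f f.
Proof. by move=> Lf; case: (PO.1 f f Lf Lf). Qed.

Lemma ptrans f g h : L f -> L g -> L h -> pref f g -> pref g h -> pref f h.
Proof. exact: PO.2. Qed.

Lemma pcompl f g : L f -> L g -> ~ pref f g -> pref g f.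
Proof. by move=> Lf Lg nfg; case: (PO.1 f g Lf Lg). Qed.

Lemma pstr_pref f g h : L f -> L g -> L h -> pstr f g -> pref g h -> pstr f h.
Proof.
move=> Lf Lg Lh [fg ngf] gh; split; first exact: ptrans fg gh.
by move=> hf; apply: ngf; exact: ptrans gh hf.
Qed.

Lemma pref_pstr f g h : L f -> L g -> L h -> pref f g -> pstr g h -> pstr f h.
Proof.
move=> Lf Lg Lh fg [gh nhg]; split; first exact: ptrans fg gh.
by move=> hf; apply: nhg; exact: ptrans hf fg.
Qed.

Lemma psim_sym f g : psim f g -> psim g f.
Proof. by case. Qed.

Lemma psim_trans f g h : L f -> L g -> L h -> psim f g -> psim g h -> psim f h.
Proof.
move=> Lf Lg Lh [fg gf] [gh hg]; split; [exact: ptrans fg gh|exact: ptrans hg gf].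
Qed.

Lemma pstr_irr f : ~ pstr f f.
Proof. by case. Qed.

Lemma null_glue N f g : null N -> L f -> L g -> psim (glue f N g) g.
Proof. by case=> _ h; exact: h. Qed.

Lemma glue_sub_eq (f g : Omega -> R) A N : A `<=` N ->
  glue f A g = glue (glue f A g) N g.
Proof.
move=> AN; apply/funext => w; rewrite !glueE.
case: (boolP (w \in N)) => // wN; case: (boolP (w \in A)) => // /set_mem /AN wN'.
by move: wN; rewrite (mem_set wN').
Qed.

Lemma null_sub N A : null N -> F A -> A `<=` N -> null A.
Proof.
move=> nN FA AN; split => // f g Lf Lg.
rewrite (glue_sub_eq f g AN); apply: null_glue => //.
exact: LG.
Qed.

Lemma glueU (f g : Omega -> R) A B : glue f (A `|` B) g = glue f A (glue f B g).
Proof.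
apply/funext => w; rewrite !glueE; case: (boolP (w \in A)) => wA.
  by rewrite in_setU wA.
by rewrite in_setU (negbTE wA).
Qed.

Lemma null_U2 A B : null A -> null B -> null (A `|` B).
Proof.
move=> nA nB; split; first by apply: (H_U w0 sF); [case: nA|case: nB].
move=> f g Lf Lg; rewrite glueU.
have FB : F B by case: nB.
apply: (psim_trans (g := glue f B g)).
- by apply: LG => //; [case: nA|exact: LG].
- exact: LG.
- done.
- apply: null_glue => //; exact: LG.
- exact: null_glue.
Qed.

Lemma null0 : null set0.
Proof.
split; first exact: (H_0 w0 sF).
move=> f g Lf Lg; have -> : glue f set0 g = g.
  by apply/funext => w; rewrite glueE in_set0.
by split; exact: prefl.
Qed.

Fixpoint Dn (N : nat -> set Omega) m : set Omega :=
  if m is m'.+1 then N m' `|` Dn N m' else set0.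

Lemma Dn_null N : (forall n, null (N n)) -> forall m, null (Dn N m).
Proof. by move=> hN; elim=> [|m IH] /=; [exact: null0|exact: null_U2]. Qed.

Lemma Dn_sub N m : Dn N m `<=` \bigcup_n N n.
Proof.
elim: m => [|m IH] /= w //; case=> [wm|/IH //]; by exists m.
Qed.

Lemma Dn_mem N m k w : (k < m)%N -> N k w -> Dn N m w.
Proof.
elim: m => [//|m IH] /=; rewrite ltnS leq_eqVlt => /orP[/eqP->|km] wk.
  by left.
by right; exact: IH.
Qed.

Lemma Linf_bound (f : Omega -> R) : L f -> exists M : R, forall w, `|f w| <= M.
Proof. by case=> _ [M hM]; exists M. Qed.

Lemma PC_sim (fs : nat -> Omega -> R) f h :
  (forall n, L (fs n)) -> L f -> L h -> (exists M, forall n w, `|fs n w| <= M) ->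
  (forall w, (fun n => fs n w) @ \oo --> f w) ->
  (forall n, psim (fs n) h) -> psim f h.
Proof.
move=> Lfs Lf Lh bd cv sim.
have [P1 P2] := HPC Lfs Lf Lh bd cv.
split.
- apply: contrapT => nfh.
  have hf : pstr h f by split => //; exact: pcompl.
  have [N HN] := P1 hf.
  have := HN N.+1 (ltnSn N) => -[_]; apply; exact: (sim N.+1).1.
- apply: contrapT => nhf.
  have fh : pstr f h by split => //; exact: pcompl.
  have [N HN] := P2 fh.
  have := HN N.+1 (ltnSn N) => -[_]; apply; exact: (sim N.+1).2.
Qed.

Lemma null_bigcup (N : nat -> set Omega) : (forall n, null (N n)) -> null (\bigcup_n N n).
Proof.
move=> hN; have FU : F (\bigcup_n N n).
  by apply: (H_bigcup w0 sF) => n; case: (hN n).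
split => // f g Lf Lg.
have FD m : F (Dn N m) by case: (Dn_null hN m).
apply: (@PC_sim (fun m => glue f (Dn N m) g)) => //.
- by move=> m; exact: LG.
- exact: LG.
- have [M1 h1] := Linf_bound Lf; have [M2 h2] := Linf_bound Lg.
  exists (Num.max M1 M2) => m w; rewrite glueE.
  by case: (w \in _); rewrite le_max ?h1 ?h2 ?orbT.
- move=> w; case: (boolP (w \in \bigcup_n N n)) => wU.
  + have [k _ wk] := set_mem wU.
    apply: (@cvg_ev _ _ _ k.+1) => m km; rewrite !glueE wU.
    by rewrite mem_set //; exact: (Dn_mem km).
  + apply: (@cvg_ev _ _ _ 0) => m _; rewrite !glueE (negbTE wU).
    case: (boolP (w \in Dn N m)) => // /set_mem /(@Dn_sub N m) wU'.
    by move: wU; rewrite mem_set.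
- move=> m; apply: null_glue => //; exact: Dn_null.
Qed.

End Pref.


Lemma cvg_approx (R : realType) (u : nat -> R) c :
  (forall n, c - n.+1%:R^-1 <= u n <= c + n.+1%:R^-1) -> u @ \oo --> c.
Proof.
move=> h; apply: (@squeeze_cvgr _ _ _ _ (fun n => c - harmonic n) (fun n => c + harmonic n)).
- by apply: nearW => n; exact: h.
- rewrite -[X in _ --> X]subr0; apply: cvgB; [exact: cvg_cst|exact: cvg_harmonic].
- rewrite -[X in _ --> X]addr0; apply: cvgD; [exact: cvg_cst|exact: cvg_harmonic].
Qed.

Section Mono.
Variables (R : realType) (Omega : Type) (w0 : Omega).
Variables (F : set (set Omega)) (sF : sigma_algebra setT F).
Variable pref : (Omega -> R) -> (Omega -> R) -> Prop.
Hypotheses (PO : preference_order F pref) (HSM : SM F pref) (HPC : PC F pref) (HST : ST F pref).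
Local Notation L := (@Linf R Omega F).
Local Notation psim := (pref_sim pref).
Local Notation pstr := (pref_strict pref).
Local Notation null := (null_events F pref).
Local Notation LG := (LG w0 sF).
Local Notation LC := (LC w0 sF).

Lemma F_eq (f : Omega -> R) a : L f -> F [set w | f w = a].
Proof.
move=> Lf; have := H_C w0 sF (H_neq w0 sF Lf (LC a)); congr F.
apply/seteqP; split => w /=; last by move=> -> /=; rewrite /cst eqxx.
by move=> h; apply/eqP; apply/negPn/negP => hn; exact: h hn.
Qed.

Lemma mono_pairs (f : Omega -> R) (s : seq (R * R)) : L f -> forall g, L g ->
  (forall w, g w <= f w) -> (forall w, f w != g w -> (f w, g w) \in s) -> pref f g.
Proof.
move=> Lf; elim: s => [|[a b] s IH] g Lg gf hs.
  have -> : g = f; last exact: (prefl PO Lf).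
  apply/funext => w; apply/eqP; apply: contraT; rewrite eq_sym => /hs.
  by rewrite in_nil.
set E := [set w | f w = a /\ g w = b].
have FE : F E.
  have -> : E = [set w | f w = a] `&` [set w | g w = b] by [].
  by apply: (H_I w0 sF); exact: F_eq.
set g' := glue (cst a) E g.
have Lg' : L g' by exact: (LG FE (LC a) Lg).
have fg' : pref f g'.
  apply: IH => // w.
  - rewrite /g' glueE; case: (boolP (w \in E)) => [/set_mem [-> _]|_] //.
  - rewrite /g' glueE; case: (boolP (w \in E)) => [/set_mem [-> _]|wE]; first by rewrite eqxx.
    move=> fg; have := hs w fg; rewrite in_cons => /orP[/eqP[fa gb]|//].
    by move: wE; rewrite mem_set.
apply: (ptrans PO Lf Lg' Lg fg').
have gE : g = glue (cst b) E g.
  apply/funext => w; rewrite glueE; case: (boolP (w \in E)) => // /set_mem [_ ->] //.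
have [ba|ab] := ltP b a.
  have [nE|nnE] := pselect (null E).
    exact: (null_glue nE (LC a) Lg).1.
  rewrite [X in pref _ X]gE; exact: (HSM FE nnE Lg ba).1.
have -> : g' = g.
  apply/funext => w; rewrite /g' glueE; case: (boolP (w \in E)) => // /set_mem [fa gb].
  rewrite /cst gb; apply/eqP; rewrite eq_le ab /=; rewrite -fa -gb; exact: gf.
exact: (prefl PO Lg).
Qed.

Lemma mono_list (f g : Omega -> R) (s1 s2 : seq R) : L f -> L g ->
  (forall w, g w <= f w) -> (forall w, f w \in s1) -> (forall w, g w \in s2) -> pref f g.
Proof.
move=> Lf Lg gf h1 h2; apply: (@mono_pairs f [seq (x, y) | x <- s1, y <- s2]) => // w _.
by apply: allpairs_f.
Qed.

End Mono.

From mathcomp Require Import zify ring lra.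

Definition irange (K : nat) : seq int := [seq (k%:Z - K%:Z) | k <- iota 0 (K + K).+1].

Lemma in_irange (i : int) (K : nat) : (`|i| <= K)%N -> i \in irange K.
Proof.
move=> h; apply/mapP; exists (absz (i + K%:Z)).
  rewrite mem_iota /=. lia.
lia.
Qed.

Section Approx.
Variable R : realType.

Definition fl (n : nat) (x : R) : R := (Num.floor (n.+1%:R * x))%:~R / n.+1%:R.
Definition fu (n : nat) (x : R) : R := fl n x + n.+1%:R^-1.

Lemma fl_le n x : fl n x <= x.
Proof.
rewrite /fl ler_pdivrMr ?ltr0n // mulrC; exact: Num.Theory.floor_le.
Qed.

Lemma fl_gt n x : x - n.+1%:R^-1 < fl n x.
Proof.
have n0 : n.+1%:R != 0 :> R by rewrite pnatr_eq0.
have -> : x - n.+1%:R^-1 = (n.+1%:R * x - 1) / n.+1%:R.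
  by rewrite mulrBl mulrAC mulfV // !mul1r.
rewrite /fl ltr_pM2r ?invr_gt0 ?ltr0n // ltrBlDr.
by have := Num.Theory.floorD1_gt (n.+1%:R * x); rewrite rmorphD /= rmorph1.
Qed.

Lemma fu_ge n x : x <= fu n x.
Proof. by rewrite /fu -lerBlDr ltW // fl_gt. Qed.

Lemma fu_le n x : fu n x <= x + n.+1%:R^-1.
Proof. by rewrite /fu lerD2r fl_le. Qed.

Lemma fl_nd n : {homo fl n : x y / x <= y}.
Proof.
move=> x y xy; rewrite /fl ler_pM2r ?invr_gt0 ?ltr0n // ler_int.
by apply: Num.Theory.le_floor; rewrite ler_pM2l ?ltr0n.
Qed.

Lemma fu_nd n : {homo fu n : x y / x <= y}.
Proof. by move=> x y xy; rewrite /fu lerD2r fl_nd. Qed.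

Lemma fl_mem n (x : R) M : `|x| <= M -> exists K, forall y, `|y| <= M ->
  fl n y \in [seq i%:~R / n.+1%:R | i <- irange K].
Proof.
move=> _; exists (Num.bound (n.+1%:R * M + 1)) => y yM.
apply/mapP; exists (Num.floor (n.+1%:R * y)) => //; apply: in_irange.
set z := n.+1%:R * y.
have zM : `|z| <= n.+1%:R * M by rewrite /z normrM ger0_norm ?ler_pM2l ?ltr0n.
have M0 : 0 <= n.+1%:R * M + 1.
  by rewrite addr_ge0 // mulr_ge0 // (le_trans _ yM).
have hb := Num.Theory.archi_boundP M0.
rewrite -(@ler_nat R) natr_absz intr_norm.
have h1 := Num.Theory.floor_le z; have h2 := Num.Theory.floorD1_gt z.
rewrite rmorphD /= rmorph1 in h2.
rewrite ltW // (le_lt_trans _ hb) //.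
rewrite ler_norml; move: zM; rewrite ler_norml => /andP[hz hz'].
apply/andP; split; lra.
Qed.

Lemma fl_meas n : nondecreasing_fun (fl n).
Proof. exact: fl_nd. Qed.

End Approx.

From mathcomp Require Import ring lra.

Section Mono2.
Variables (R : realType) (Omega : Type) (w0 : Omega).
Variables (F : set (set Omega)) (sF : sigma_algebra setT F).
Variable pref : (Omega -> R) -> (Omega -> R) -> Prop.
Hypotheses (PO : preference_order F pref) (HSM : SM F pref) (HPC : PC F pref) (HST : ST F pref).
Local Notation L := (@Linf R Omega F).
Local Notation psim := (pref_sim pref).
Local Notation pstr := (pref_strict pref).
Local Notation null := (null_events F pref).
Local Notation LG := (LG w0 sF).
Local Notation LC := (LC w0 sF).

Lemma inv_le1 n : n.+1%:R^-1 <= 1 :> R.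
Proof. by rewrite invf_le1 ?ler1n ?ltr0n. Qed.

Lemma inv_gt0 n : 0 < n.+1%:R^-1 :> R.
Proof. by rewrite invr_gt0 ltr0n. Qed.

Lemma Linf_fl n (f : Omega -> R) : L f -> L (fun w => fl n (f w)).
Proof.
move=> Lf; have [M hM] := Linf_bound Lf.
apply: (@Linf_of _ _ w0 _ sF _ (M + 1)).
  have := (measurableT_comp (nondecreasing_measurable measurableT (@fl_nd R n))
     (Linf_meas (w0:=w0) sF Lf)). exact.
move=> w; have h1 := fl_le n (f w); have h2 := fl_gt n (f w).
have h3 := inv_le1 n; have h4 := inv_gt0 n.
move: (hM w); rewrite ler_norml => /andP[h5 h6]; rewrite ler_norml; set e := _^-1 in h2 h3 h4 *; clearbody e; apply/andP; split; lra.
Qed.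

Lemma Linf_fu n (f : Omega -> R) : L f -> L (fun w => fu n (f w)).
Proof.
move=> Lf; apply: (Linf_D w0 sF (Linf_fl n Lf) (LC _)).
Qed.

Lemma mono (f g : Omega -> R) : L f -> L g -> (forall w, g w <= f w) -> pref f g.
Proof.
move=> Lf Lg gf; apply: contrapT => nfg.
have gf' : pstr g f by split => //; exact: (pcompl PO Lf Lg nfg).
have [Mf hMf] := Linf_bound Lf; have [Mg hMg] := Linf_bound Lg.
pose fs n := fun w => fu n (f w).
have bds : exists M, forall n w, `|fs n w| <= M.
  exists (Mf + 1) => n w; rewrite /fs; have h1 := fu_ge n (f w); have h2 := fu_le n (f w).
  have h3 := inv_le1 n; have h4 := inv_gt0 n.
  move: (hMf w); rewrite ler_norml => /andP[h5 h6]; rewrite ler_norml; set e := _^-1 in h1 h2 h3 h4 *; clearbody e; apply/andP; split; lra.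
have cvf : forall w, (fun n => fs n w) @ \oo --> f w.
  move=> w; apply: cvg_approx => n; rewrite /fs.
  have h1 := fu_ge n (f w); have h2 := fu_le n (f w); have h3 := inv_gt0 n.
  set e := _^-1 in h1 h2 h3 *; clearbody e; apply/andP; split; lra.
have [P1 _] := HPC (fun n => Linf_fu n Lf) Lf Lg bds cvf.
have [N HN] := P1 gf'.
set n := N.+1; have gfn : pstr g (fs n) := HN n (ltnSn N).
pose gs m := fun w => fl m (g w).
have bdg : exists M, forall m w, `|gs m w| <= M.
  exists (Mg + 1) => m w; rewrite /gs; have h1 := fl_le m (g w); have h2 := fl_gt m (g w).
  have h3 := inv_le1 m; have h4 := inv_gt0 m.
  move: (hMg w); rewrite ler_norml => /andP[h5 h6]; rewrite ler_norml; set e := _^-1 in h1 h2 h3 h4 *; clearbody e; apply/andP; split; lra.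
have cvg' : forall w, (fun m => gs m w) @ \oo --> g w.
  move=> w; apply: cvg_approx => m; rewrite /gs.
  have h1 := fl_le m (g w); have h2 := fl_gt m (g w); have h3 := inv_gt0 m.
  set e := _^-1 in h1 h2 h3 *; clearbody e; apply/andP; split; lra.
have Lfn : L (fs n) by exact: Linf_fu.
have [_ P2] := HPC (fun m => Linf_fl m Lg) Lg Lfn bdg cvg'.
have [N' HN'] := P2 gfn.
set m := N'.+1; have [_ hc] := HN' m (ltnSn N').
apply: hc.
have [K1 hK1] := fl_mem n (hMf w0).
have [K2 hK2] := fl_mem m (hMg w0).
apply: (@mono_list _ _ w0 F sF pref PO HSM (fs n) (gs m)
  [seq v + n.+1%:R^-1 | v <- [seq i%:~R / n.+1%:R | i <- irange K1]]
  [seq i%:~R / m.+1%:R | i <- irange K2]) => //.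
- exact: Linf_fl.
- move=> w; rewrite /gs /fs; apply: (le_trans (fl_le _ _)); apply: (le_trans (gf w)).
  exact: fu_ge.
- move=> w; rewrite /fs /fu; apply/mapP; exists (fl n (f w)) => //; exact: hK1.
- move=> w; rewrite /gs; exact: hK2.
Qed.

End Mono2.

From mathcomp Require Import ring lra.

Section Strict.
Variables (R : realType) (Omega : Type) (w0 : Omega).
Variables (F : set (set Omega)) (sF : sigma_algebra setT F).
Variable pref : (Omega -> R) -> (Omega -> R) -> Prop.
Hypotheses (PO : preference_order F pref) (HSM : SM F pref) (HPC : PC F pref) (HST : ST F pref).
Local Notation L := (@Linf R Omega F).
Local Notation psim := (pref_sim pref).
Local Notation pstr := (pref_strict pref).
Local Notation null := (null_events F pref).
Local Notation LG := (LG w0 sF).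
Local Notation LC := (LC w0 sF).
Local Notation mono := (mono w0 sF PO HSM HPC).

Definition piece (f g : Omega -> R) (m : nat) : set Omega :=
  match @unpickle (rat * rat)%type m with
  | Some (q, r) => if (ratr q < ratr r :> R) then
       [set w | g w < ratr q] `&` [set w | ratr r < f w] else set0
  | None => set0 end.

Lemma F_piece f g m : L f -> L g -> F (piece f g m).
Proof.
move=> Lf Lg; rewrite /piece; case: (unpickle m) => [[q r]|]; last exact: (H_0 w0 sF).
case: ifP => _; last exact: (H_0 w0 sF).
apply: (H_I w0 sF); [exact: (H_lt w0 sF Lg (LC _))|exact: (H_lt w0 sF (LC _) Lf)].
Qed.

Lemma strict_mono (f g : Omega -> R) : L f -> L g -> (forall w, g w <= f w) ->
  ~ null [set w | g w < f w] -> pstr f g.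
Proof.
move=> Lf Lg gf nB.
have [m nm] : exists m, ~ null (piece f g m).
  apply: contrapT => h; apply: nB.
  apply: (@null_sub _ _ w0 F sF pref (\bigcup_m piece f g m)).
  - apply: (null_bigcup w0 sF PO HPC) => m; apply: contrapT => nm; apply: h; by exists m.
  - exact: (H_lt w0 sF Lg Lf).
  - move=> w /= gfw.
    have [q] := rat_in_itvoo gfw; rewrite in_itv /= => /andP[gq qf].
    have [r] := rat_in_itvoo qf; rewrite in_itv /= => /andP[qr rf].
    exists (pickle (q, r)); first by []. rewrite /piece pickleK qr; by split.
move: nm; rewrite /piece; case E: (unpickle m) => [[q r]|]; last first.
  by move=> h; exfalso; apply: h; exact: (null0 w0 sF PO).
case: ifP => qr; last first.
  by move=> h; exfalso; apply: h; exact: (null0 w0 sF PO).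
set C := _ `&` _ => nC.
have FC : F C by apply: (H_I w0 sF); [exact: (H_lt w0 sF Lg (LC _))|exact: (H_lt w0 sF (LC _) Lf)].
have L1 : L (glue (cst (ratr r)) C g) by exact: (LG FC (LC _) Lg).
have L2 : L (glue (cst (ratr q)) C g) by exact: (LG FC (LC _) Lg).
apply: (pref_pstr PO Lf L1 Lg).
  apply: mono => // w; rewrite glueE; case: (boolP (w \in C)) => // /set_mem [_ /ltW] //.
apply: (pstr_pref PO L1 L2 Lg); first exact: (HSM FC nC Lg qr).
apply: mono => // w; rewrite glueE; case: (boolP (w \in C)) => // /set_mem [/ltW] //.
Qed.

End Strict.

From mathcomp Require Import ring lra.

Section CE.
Variables (R : realType) (Omega : Type) (w0 : Omega).
Variables (F : set (set Omega)) (sF : sigma_algebra setT F).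
Variable pref : (Omega -> R) -> (Omega -> R) -> Prop.
Hypotheses (PO : preference_order F pref) (HSM : SM F pref) (HPC : PC F pref) (HST : ST F pref).
Hypothesis nT : ~ null_events F pref setT.
Local Notation L := (@Linf R Omega F).
Local Notation psim := (pref_sim pref).
Local Notation pstr := (pref_strict pref).
Local Notation null := (null_events F pref).
Local Notation LG := (LG w0 sF).
Local Notation LC := (LC w0 sF).
Local Notation mono := (mono w0 sF PO HSM HPC).

Lemma LCx (x : R) : L (cst x). Proof. exact: LC. Qed.
Local Hint Resolve LCx : core.

Lemma cst_strict (x y : R) : y < x -> pstr (cst x) (cst y).
Proof.
move=> yx; have := HSM (H_T w0 sF) nT (LC 0) yx.
have E z : glue (Defs.cst z) setT (cst 0) = cst z.
  by apply/funext => w; rewrite glueE in_setT.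
by rewrite !E.
Qed.

Lemma cst_sim_eq (x y : R) : psim (cst x) (cst y) -> x = y.
Proof.
move=> [h1 h2]; apply/eqP; rewrite eq_le; apply/andP; split; rewrite leNgt; apply/negP => h.
- by have [_] := cst_strict h; apply.
- by have [_] := cst_strict h; apply.
Qed.

Lemma cvg_cst_inv (c : R) s : (fun n => c + s * n.+1%:R^-1) @ \oo --> c.
Proof.
rewrite -[X in _ --> X]addr0; apply: cvgD; first exact: cvg_cst.
rewrite -(mulr0 s); apply: cvgM; [exact: cvg_cst|exact: cvg_harmonic].
Qed.

Lemma ce_ex (h : Omega -> R) : L h -> exists c, psim h (cst c).
Proof.
move=> Lh; have [M hM] := Linf_bound Lh.
have M0 : 0 <= M by apply: le_trans (hM w0).
pose S := [set x : R | - M <= x <= M /\ pref h (cst x)].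
have S0 : S (- M).
  split; first by rewrite lexx /= (le_trans _ M0) // oppr_le0.
  by apply: mono => // w; rewrite /cst; move: (hM w); rewrite ler_norml => /andP[].
have supS : has_sup S by split; [exists (- M)|exists M => x [/andP[_ ?] _]].
set c := sup S.
have cS x : S x -> x <= c by move=> Sx; exact: sup_upper_bound.
have cM : c <= M by apply: ge_sup; [exists (- M)|move=> x [/andP[_ ?] _]].
have Mc : - M <= c by exact: cS.
have bnd s : exists B, forall n (w : Omega), `|(fun n => cst (c + s * n.+1%:R^-1)) n w| <= B.
  exists (`|c| + `|s|) => n w; rewrite /cst (le_trans (ler_normD _ _)) // lerD2l normrM.
  rewrite -[leRHS]mulr1; apply: ler_wpM2l => //.
  by rewrite ger0_norm ?invr_ge0 ?ler0n // inv_le1.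
have cvs s : forall w : Omega, (fun n => cst (c + s * n.+1%:R^-1) w) @ \oo --> cst c w.
  by move=> w; exact: cvg_cst_inv.
exists c; split.
- apply: contrapT => nh.
  have hc : pstr (cst c) h by split => //; exact: (pcompl PO Lh (LC c) nh).
  have [_ P2] := HPC (fun n => LC (c + -1 * n.+1%:R^-1)) (LC c) Lh (bnd (-1)) (cvs (-1)).
  have [N HN] := P2 hc; have [h1 h2] := HN N.+1 (ltnSn N).
  set d := c + -1 * N.+2%:R^-1 in h1 h2.
  have ub : ubound S d.
    move=> x [_ hx]; rewrite leNgt; apply/negP => dx; apply: h2.
    apply: (ptrans PO Lh (LC x) (LC d) hx); apply: mono => // w; exact: ltW.
  have := ge_sup (ex_intro _ _ S0) ub; rewrite -/c /d.
  have := inv_gt0 R N.+1; set e := _^-1; lra.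
- apply: contrapT => nh.
  have hc : pstr h (cst c) by split => //; exact: (pcompl PO (LC c) Lh nh).
  have [P1 _] := HPC (fun n => LC (c + 1 * n.+1%:R^-1)) (LC c) Lh (bnd 1) (cvs 1).
  have [N HN] := P1 hc; have [h1 h2] := HN N.+1 (ltnSn N).
  set d := c + 1 * N.+2%:R^-1 in h1 h2.
  have dc : c < d by rewrite /d ltrDl mul1r inv_gt0.
  have [dM|Md] := leP d M.
    have := cS d (conj (introT andP (conj (le_trans Mc (ltW dc)) dM)) h1).
    by rewrite leNgt dc.
  apply: h2; apply: (ptrans PO (LC d) (LC M) Lh); first by apply: mono => // w; exact: ltW.
  by apply: mono => // w; rewrite /cst; move: (hM w); rewrite ler_norml => /andP[].
Qed.

End CE.

From mathcomp Require Import ring lra.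

Section PhiS.
Variables (R : realType) (Omega : Type) (w0 : Omega).
Variables (F : set (set Omega)) (sF : sigma_algebra setT F).
Variable pref : (Omega -> R) -> (Omega -> R) -> Prop.
Hypotheses (PO : preference_order F pref) (HSM : SM F pref) (HPC : PC F pref) (HST : ST F pref).
Hypothesis nT : ~ null_events F pref setT.
Local Notation L := (@Linf R Omega F).
Local Notation psim := (pref_sim pref).
Local Notation pstr := (pref_strict pref).
Local Notation null := (null_events F pref).
Local Notation LG := (LG w0 sF).
Local Notation mono := (mono w0 sF PO HSM HPC).
Lemma LCy (x : R) : L (cst x). Proof. exact: LCx. Qed.
Local Hint Resolve LCy : core.

Definition Phi (h : Omega -> R) : R := xget 0 [set c | psim h (cst c)].

Lemma Phi_sim h : L h -> psim h (cst (Phi h)).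
Proof. move=> Lh; exact: (xgetPex 0 (ce_ex w0 sF PO HSM HPC Lh)). Qed.

Lemma Phi_pref1 h : L h -> pref h (cst (Phi h)).
Proof. by move=> /Phi_sim []. Qed.
Lemma Phi_pref2 h : L h -> pref (cst (Phi h)) h.
Proof. by move=> /Phi_sim []. Qed.

Lemma Phi_le h h' : L h -> L h' -> pref h h' -> Phi h' <= Phi h.
Proof.
move=> Lh Lh' hh'; rewrite leNgt; apply/negP => lt.
have s1 := cst_strict w0 sF HSM nT lt.
have s2 : pstr h' (cst (Phi h)) by exact: (pref_pstr PO Lh' (LCx w0 sF _) (LCx w0 sF _) (Phi_pref1 Lh') s1).
have [_] := pstr_pref PO Lh' (LCx w0 sF _) Lh s2 (Phi_pref2 Lh); apply; exact: hh'.
Qed.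

Lemma Phi_lt h h' : L h -> L h' -> pstr h h' -> Phi h' < Phi h.
Proof.
move=> Lh Lh' [_ nhh']; rewrite ltNge; apply/negP => le; apply: nhh'.
apply: (ptrans PO Lh' (LCx w0 sF (Phi h')) Lh (Phi_pref1 Lh')).
apply: (ptrans PO (LCx w0 sF _) (LCx w0 sF (Phi h)) Lh _ (Phi_pref2 Lh)).
by apply: mono => // w.
Qed.

Lemma Phi_lt_pstr h h' : L h -> L h' -> Phi h' < Phi h -> pstr h h'.
Proof.
move=> Lh Lh' lt; have s1 := cst_strict w0 sF HSM nT lt.
apply: (pref_pstr PO Lh (LCx w0 sF _) Lh' (Phi_pref1 Lh)).
exact: (pstr_pref PO (LCx w0 sF _) (LCx w0 sF _) Lh' s1 (Phi_pref2 Lh')).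
Qed.

Lemma Phi_eq h h' : L h -> L h' -> psim h h' -> Phi h = Phi h'.
Proof.
move=> Lh Lh' [a b]; apply/eqP; rewrite eq_le; apply/andP; split; exact: Phi_le.
Qed.

End PhiS.

From mathcomp Require Import ring lra.

Lemma Dn_mem_inv (Omega : Type) (A : nat -> set Omega) m w :
  Dn A m w -> exists2 j, (j < m)%N & A j w.
Proof.
elim: m => [//|m IH] /= [wm|/IH [j jm wj]]; first by exists m.
by exists j => //; exact: ltnW.
Qed.

Section Add.
Variables (R : realType) (Omega : Type) (w0 : Omega).
Variables (F : set (set Omega)) (sF : sigma_algebra setT F).
Variable pref : (Omega -> R) -> (Omega -> R) -> Prop.
Hypotheses (PO : preference_order F pref) (HSM : SM F pref) (HPC : PC F pref) (HST : ST F pref).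
Local Notation L := (@Linf R Omega F).
Local Notation psim := (pref_sim pref).
Local Notation pstr := (pref_strict pref).
Local Notation null := (null_events F pref).
Local Notation LG := (LG w0 sF).
Local Notation mono := (mono w0 sF PO HSM HPC).
Lemma LCz (x : R) : L (cst x). Proof. exact: LCx. Qed.
Local Hint Resolve LCz : core.

Lemma mulindE (f : Omega -> R) A : f \* \1_A = glue f A (cst 0).
Proof. by apply/funext => w; rewrite glueE /= indicE; case: (w \in A); rewrite ?mulr1 ?mulr0. Qed.

Lemma L_mi (f : Omega -> R) A : F A -> L f -> L (f \* \1_A).
Proof. by move=> FA Lf; rewrite mulindE; exact: LG. Qed.

Lemma add2 (f k : Omega -> R) A B : F A -> F B -> A `&` B = set0 -> L f -> L k ->
  pref (f \* \1_A) (k \* \1_A) -> pref (f \* \1_B) (k \* \1_B) ->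
  pref (f \* \1_(A `|` B)) (k \* \1_(A `|` B)).
Proof.
move=> FA FB AB Lf Lk hA hB.
have e1 : f \* \1_(A `|` B) = glue f A (f \* \1_B).
  apply/funext => w; rewrite glueE /= !indicE in_setU; by case: (w \in A); rewrite /= ?mulr1.
have e2 : glue k A (f \* \1_B) = glue f B (k \* \1_A).
  apply/funext => w; rewrite !glueE /= !indicE.
  case: (boolP (w \in A)) => wA; case: (boolP (w \in B)) => wB /=; rewrite ?mulr1 ?mulr0 //.
  have : (A `&` B) w by split; exact/set_mem.
  by rewrite AB.
have e3 : glue k B (k \* \1_A) = k \* \1_(A `|` B).
  apply/funext => w; rewrite glueE /= !indicE in_setU.
  by case: (w \in B); rewrite ?orbT ?mulr1 //= orbF.
rewrite e1 -e3.
have L1 : L (f \* \1_B) by exact: L_mi.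
have L2 : L (k \* \1_A) by exact: L_mi.
apply: (ptrans PO (LG FA Lf L1) (LG FA Lk L1) (LG FB Lk L2)).
  apply: (HST FA Lf Lk (LCz 0) L1); by rewrite -!mulindE.
rewrite e2; apply: (HST FB Lf Lk (LCz 0) L2); by rewrite -!mulindE.
Qed.

Lemma PC_pref (fs : nat -> Omega -> R) f g :
  (forall n, L (fs n)) -> L f -> L g -> (exists M, forall n w, `|fs n w| <= M) ->
  (forall w, (fun n => fs n w) @ \oo --> f w) ->
  (forall n, pref (fs n) g) -> pref f g.
Proof.
move=> Lfs Lf Lg bd cv h; apply: contrapT => nfg.
have gf : pstr g f by split => //; exact: (pcompl PO Lf Lg nfg).
have [P1 _] := HPC Lfs Lf Lg bd cv.
have [N HN] := P1 gf; have [_] := HN N.+1 (ltnSn N); apply; exact: h.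
Qed.

Lemma PC_pref2 (fs : nat -> Omega -> R) f g :
  (forall n, L (fs n)) -> L f -> L g -> (exists M, forall n w, `|fs n w| <= M) ->
  (forall w, (fun n => fs n w) @ \oo --> f w) ->
  (forall n, pref g (fs n)) -> pref g f.
Proof.
move=> Lfs Lf Lg bd cv h; apply: contrapT => nfg.
have gf : pstr f g by split => //; exact: (pcompl PO Lg Lf nfg).
have [_ P2] := HPC Lfs Lf Lg bd cv.
have [N HN] := P2 gf; have [_] := HN N.+1 (ltnSn N); apply; exact: h.
Qed.

Lemma addcount (f k : Omega -> R) (A : nat -> set Omega) :
  (forall n, F (A n)) -> (forall n m, (n < m)%N -> A n `&` A m = set0) -> L f -> L k ->
  (forall n, pref (f \* \1_(A n)) (k \* \1_(A n))) ->
  pref (f \* \1_(\bigcup_n A n)) (k \* \1_(\bigcup_n A n)).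
Proof.
move=> FA dA Lf Lk hA.
set U := \bigcup_n A n.
have FU : F U by exact: (H_bigcup w0 sF).
have FD m : F (Dn A m).
  elim: m => [|m IH] /=; [exact: (H_0 w0 sF)|exact: (H_U w0 sF)].
have hD m : pref (f \* \1_(Dn A m)) (k \* \1_(Dn A m)).
  elim: m => [|m IH] /=.
    have -> : f \* \1_set0 = cst 0 by apply/funext => w; rewrite /= indicE in_set0 mulr0.
    have -> : k \* \1_set0 = cst 0 by apply/funext => w; rewrite /= indicE in_set0 mulr0.
    exact: (prefl PO).
  apply: add2 => //.
  apply/seteqP; split => // w [wm /(@Dn_mem_inv _ A m w) [j jm wj]].
  by have : (A j `&` A m) w by []; rewrite dA.
have LkU : L (k \* \1_U) by exact: L_mi.
apply: (@PC_pref (fun m => glue f (Dn A m) (k \* \1_U))) => //.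
- by move=> m; exact: LG.
- exact: L_mi.
- have [M1 h1] := Linf_bound Lf; have [M2 h2] := Linf_bound Lk.
  exists (Num.max M1 M2) => m w; rewrite glueE /= indicE.
  case: (w \in Dn A m); case: (w \in U); rewrite ?mulr1 ?mulr0 ?normr0 ?le_max ?h1 ?h2 ?orbT //.
  by rewrite (le_trans (normr_ge0 _) (h1 w)).
- move=> w; rewrite /= indicE; case: (boolP (w \in U)) => wU.
  + move: (wU) => /set_mem [j _ wj].
    apply: (@cvg_ev _ _ _ j.+1) => m jm; rewrite glueE mulr1 mem_set //.
    exact: (Dn_mem jm).
  + apply: (@cvg_ev _ _ _ 0) => m _; rewrite glueE /= !indicE (negbTE wU) mulr0.
    case: (boolP (w \in Dn A m)) => [/set_mem /(@Dn_sub _ A m w) wU'|_]; last by rewrite mulr0.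
    by move: wU; rewrite mem_set.
- move=> m.
  have e : glue k (Dn A m) (k \* \1_U) = k \* \1_U.
    apply/funext => w; rewrite glueE /= indicE.
    case: (boolP (w \in Dn A m)) => // /set_mem /(@Dn_sub _ A m w) wU.
    by rewrite mem_set // mulr1.
  rewrite -[X in pref _ X]e.
  apply: (HST (FD m) Lf Lk (LCz 0) LkU); by rewrite -!mulindE.
Qed.

End Add.

From mathcomp Require Import ring lra.

Section Exh.
Variables (R : realType) (Omega : Type) (w0 : Omega).
Variables (F : set (set Omega)) (sF : sigma_algebra setT F).
Variable pref : (Omega -> R) -> (Omega -> R) -> Prop.
Hypotheses (PO : preference_order F pref) (HSM : SM F pref) (HPC : PC F pref) (HST : ST F pref).
Hypothesis nT : ~ null_events F pref setT.
Local Notation L := (@Linf R Omega F).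
Local Notation psim := (pref_sim pref).
Local Notation pstr := (pref_strict pref).
Local Notation null := (null_events F pref).
Local Notation LG := (LG w0 sF).
Local Notation mono := (mono w0 sF PO HSM HPC).
Local Notation Phi := (Phi pref).
Local Notation Phi_le := (Phi_le w0 sF PO HSM HPC nT).
Local Notation Phi_lt := (Phi_lt w0 sF PO HSM HPC).
Lemma LCw (x : R) : L (cst x). Proof. exact: LCx. Qed.
Local Hint Resolve LCw : core.

Lemma Phi_cst (c : R) : Phi (cst c) = c.
Proof.
have [a b] := Phi_sim w0 sF PO HSM HPC (LCw c).
by apply/esym; apply: (cst_sim_eq w0 sF HSM nT); split.
Qed.

Definition mu (B : set Omega) : R := Phi (\1_B : Omega -> R).

Lemma L1 B : F B -> L (\1_B : Omega -> R).
Proof. exact: Linf_ind. Qed.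

Lemma mu0 : mu set0 = 0.
Proof.
rewrite /mu -[RHS](Phi_cst 0); congr Phi; apply/funext => w; by rewrite indicE in_set0.
Qed.

Lemma mu_ge0 B : F B -> 0 <= mu B.
Proof.
move=> FB; rewrite -(Phi_cst 0); apply: Phi_le => //; first exact: L1.
apply: mono; [exact: L1|exact: LCw|] => w; rewrite indicE /cst; case: (_ \in _) => //.
Qed.

Lemma mu_le1 B : F B -> mu B <= 1.
Proof.
move=> FB; rewrite -(Phi_cst 1); apply: Phi_le => //; first exact: L1.
apply: mono; [exact: LCw|exact: L1|] => w; rewrite indicE /cst; case: (_ \in _) => //.
Qed.

Lemma mu_mono A B : F A -> F B -> A `<=` B -> mu A <= mu B.
Proof.
move=> FA FB AB; apply: Phi_le; [exact: L1|exact: L1|].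
apply: mono; [exact: L1|exact: L1|] => w; rewrite !indicE.
case: (boolP (w \in A)) => // /set_mem /AB /mem_set ->; exact: lexx.
Qed.

Lemma mu_pos B : F B -> ~ null B -> 0 < mu B.
Proof.
move=> FB nB; rewrite -(Phi_cst 0); apply: Phi_lt; [exact: L1|done|].
have := HSM FB nB (LCw 0) (@ltr01 R).
have -> : glue (Defs.cst 1) B (cst 0) = (\1_B : Omega -> R).
  by apply/funext => w; rewrite glueE indicE; case: (_ \in _).
have -> // : glue (Defs.cst 0) B (cst 0) = cst (0 : R).
  by apply/funext => w; rewrite glueE; case: (_ \in _).
Qed.

Lemma mu_small (Bs : nat -> set Omega) : (forall n, F (Bs n)) ->
  (forall n m, (n < m)%N -> Bs n `&` Bs m = set0) ->
  forall d, 0 < d -> exists n, mu (Bs n) < d.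
Proof.
move=> FB dB d d0.
have cv : forall w, (fun n => (\1_(Bs n) : Omega -> R) w) @ \oo --> cst 0 w.
  move=> w; case: (pselect (exists j, Bs j w)) => [[j wj]|nw].
  - apply: (@cvg_ev _ _ _ j.+1) => n jn; rewrite indicE.
    case: (boolP (w \in Bs n)) => // /set_mem wn.
    by have : (Bs j `&` Bs n) w by []; rewrite dB.
  - apply: (@cvg_ev _ _ _ 0) => n _; rewrite indicE.
    case: (boolP (w \in Bs n)) => // /set_mem wn; exfalso; apply: nw; by exists n.
have bd : exists M, forall n w, `|(\1_(Bs n) : Omega -> R) w| <= M.
  by exists 1 => n w; rewrite indicE; case: (_ \in _); rewrite ?normr1 ?normr0.
have [P1 _] := HPC (fun n => L1 (FB n)) (LCw 0) (LCw d) bd cv.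
have [N HN] := P1 (cst_strict w0 sF HSM nT d0).
exists N.+1; have := Phi_lt (LCw d) (L1 (FB N.+1)) (HN N.+1 (ltnSn N)).
by rewrite Phi_cst.
Qed.

End Exh.

From mathcomp Require Import ring lra.

Section Exh2.
Variables (R : realType) (Omega : Type) (w0 : Omega).
Variables (F : set (set Omega)) (sF : sigma_algebra setT F).
Variable pref : (Omega -> R) -> (Omega -> R) -> Prop.
Hypotheses (PO : preference_order F pref) (HSM : SM F pref) (HPC : PC F pref) (HST : ST F pref).
Hypothesis nT : ~ null_events F pref setT.
Local Notation L := (@Linf R Omega F).
Local Notation null := (null_events F pref).
Local Notation mu := (mu pref).
Variables (G : set (set Omega)) (sG : sigma_algebra setT G) (GF : G `<=` F).
Variable K : set Omega -> Prop.
Hypotheses (KG : forall B, K B -> G B) (K0 : K set0).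
Let KF B : K B -> F B. Proof. by move=> /KG /GF. Qed.

Definition sX (X : set Omega) : R := sup [set mu B | B in [set B | K B /\ B `<=` X]].

Lemma hsX X : has_sup [set mu B | B in [set B | K B /\ B `<=` X]].
Proof.
split; first by exists (mu set0); exists set0 => //; split => //; exact: sub0set.
exists 1 => _ [C [KC _] <-]; exact: (mu_le1 w0 sF PO HSM HPC nT (KF KC)).
Qed.

Lemma sX_ub X B : K B -> B `<=` X -> mu B <= sX X.
Proof. move=> KB BX; apply: (sup_upper_bound (hsX X)); by exists B. Qed.

Lemma next_ex X : exists B, K B /\ B `<=` X /\ sX X <= 2 * mu B.
Proof.
have hs : has_sup [set mu B | B in [set B | K B /\ B `<=` X]].
  split; first by exists (mu set0); exists set0 => //; split => //; exact: sub0set.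
  exists 1 => _ [C [KC _] <-]; exact: (mu_le1 w0 sF PO HSM HPC nT (KF KC)).
have [s0|s0] := leP (sX X) 0.
  exists set0; split => //; split => //; rewrite (mu0 w0 sF PO HSM HPC nT) mulr0 //.
have e0 : 0 < sX X / 2 by rewrite divr_gt0.
have [_ [B [KB BX] <-] hB] := sup_adherent e0 hs.
exists B; split => //; split => //.
move: hB; rewrite -/(sX X); lra.
Qed.

Definition next (X : set Omega) : set Omega :=
  xget set0 [set B | K B /\ B `<=` X /\ sX X <= 2 * mu B].

Lemma nextP X : K (next X) /\ next X `<=` X /\ sX X <= 2 * mu (next X).
Proof. exact: (xgetPex set0 (next_ex X)). Qed.

Fixpoint Rem (A : set Omega) n : set Omega :=
  if n is n'.+1 then Rem A n' `\` next (Rem A n') else A.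

Lemma Rem_dec A n m : (n <= m)%N -> Rem A m `<=` Rem A n.
Proof.
elim: m => [|m IH]; first by rewrite leqn0 => /eqP ->.
rewrite leq_eqVlt => /orP[/eqP -> //|]; rewrite ltnS => nm w /= [wm _]; exact: IH.
Qed.

Lemma exhaust (A : set Omega) : G A ->
  (forall Bs : nat -> set Omega, (forall n, K (Bs n)) ->
     (forall n m, (n < m)%N -> Bs n `&` Bs m = set0) -> K (\bigcup_n Bs n)) ->
  (forall A', G A' -> A' `<=` A -> ~ null A' -> exists B, [/\ K B, B `<=` A' & ~ null B]) ->
  exists U, [/\ K U, U `<=` A & null (A `\` U)].
Proof.
move=> FA Kcup Kex.
pose Bs n := next (Rem A n).
have KB n : K (Bs n) by case: (nextP (Rem A n)).
have BR n : Bs n `<=` Rem A n by case: (nextP (Rem A n)) => _ [].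
have dB n m : (n < m)%N -> Bs n `&` Bs m = set0.
  move=> nm; apply/seteqP; split => // w [wn wm].
  have := @Rem_dec A _ _ nm w (BR m w wm); by case.
exists (\bigcup_n Bs n); split; first exact: Kcup.
  move=> w [n _ wn]; exact: (@Rem_dec A _ _ (leq0n n) w (BR n w wn)).
apply: contrapT => nAU.
have FU : G (\bigcup_n Bs n) by apply: KG; exact: Kcup.
have [C [KC CAU nC]] := Kex _ (H_D w0 sG FA FU) (@subDsetl _ _ _) nAU.
have CR n : C `<=` Rem A n.
  elim: n => [|n IH] w Cw /=; first by case: (CAU w Cw).
  split; first exact: IH.
  move=> wB; have [_] := CAU w Cw; apply; by exists n.
have mC := mu_pos w0 sF PO HSM HPC nT (KF KC) nC.
have [n hn] := mu_small w0 sF PO HSM HPC nT (fun n => KF (KB n)) dB (divr_gt0 mC (ltr0n _ 2)).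
have h1 := sX_ub KC (CR n).
have [_ [_ h2]] := nextP (Rem A n).
move: hn h1 h2; rewrite -/(Bs n); lra.
Qed.

End Exh2.

From mathcomp Require Import ring lra.

Lemma LinfGF (R : realType) (Omega : Type) (G F : set (set Omega)) (g : Omega -> R) :
  G `<=` F -> Linf G g -> Linf F g.
Proof. by move=> GF [mg bg]; split => // B mB; apply: GF; exact: mg. Qed.

Section Main.
Variables (R : realType) (Omega : Type) (w0 : Omega).
Variables (F : set (set Omega)) (sF : sigma_algebra setT F).
Variables (G : set (set Omega)) (sG : sigma_algebra setT G) (GF : G `<=` F).
Variable pref : (Omega -> R) -> (Omega -> R) -> Prop.
Hypotheses (PO : preference_order F pref) (HSM : SM F pref) (HPC : PC F pref) (HST : ST F pref).
Hypothesis nT : ~ null_events F pref setT.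
Variable f : Omega -> R.
Hypothesis Lf : Linf F f.
Local Notation L := (@Linf R Omega F).
Local Notation LGg := (@Linf R Omega G).
Local Notation psim := (pref_sim pref).
Local Notation pstr := (pref_strict pref).
Local Notation null := (null_events F pref).
Local Notation LG := (LG w0 sF).
Local Notation mono := (mono w0 sF PO HSM HPC).
Local Notation Phi := (Phi pref).
Local Notation Phi_le := (Phi_le w0 sF PO HSM HPC nT).
Local Notation Phi_lt := (Phi_lt w0 sF PO HSM HPC).
Lemma LCm (x : R) : L (cst x). Proof. exact: LCx. Qed.
Local Hint Resolve LCm : core.
Lemma LGF g : LGg g -> L g. Proof. exact: LinfGF. Qed.
Lemma Lmi g A : G A -> L g -> L (g \* \1_A).
Proof. move=> GA Lg; exact: (L_mi w0 sF (GF GA) Lg). Qed.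

Definition Hs : set (Omega -> R) :=
  [set h | LGg h /\ forall A, G A -> pref (f \* \1_A) (h \* \1_A)].

Lemma Hs_max h1 h2 : Hs h1 -> Hs h2 -> Hs (h1 \max h2).
Proof.
move=> [L1 H1] [L2 H2]; split; first exact: (Linf_max w0 sG).
move=> A GA.
set B := [set w | h1 w < h2 w].
have GB : G B by exact: (H_lt w0 sG).
have e1 : (h1 \max h2) \* \1_(A `&` B) = h2 \* \1_(A `&` B).
  apply/funext => w; rewrite /= indicE; case: (boolP (w \in A `&` B)) => [/set_mem [_ wB]|_].
    by rewrite /Order.max wB.
  by rewrite !mulr0.
have e2 : (h1 \max h2) \* \1_(A `\` B) = h1 \* \1_(A `\` B).
  apply/funext => w; rewrite /= indicE; case: (boolP (w \in A `\` B)) => [/set_mem [_ wB]|_].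
    by rewrite /Order.max; case: ifP => // h; exfalso; apply: wB.
  by rewrite !mulr0.
have eA : A = (A `&` B) `|` (A `\` B).
  apply/seteqP; split => w.
  - by move=> wA; have [wB|wB] := pselect (B w); [left|right].
  - by case=> -[].
rewrite eA; apply: (add2 w0 sF PO HST) => //.
- exact: GF (H_I w0 sG GA GB).
- exact: GF (H_D w0 sG GA GB).
- by apply/seteqP; split => // w [[_ ?] [_ ?]].
- exact: LGF (Linf_max w0 sG L1 L2).
- by rewrite e1; apply: H2; exact: (H_I w0 sG).
- by rewrite e2; apply: H1; exact: (H_D w0 sG).
Qed.

Lemma LGc (c : R) : LGg (cst c). Proof. exact: (Linf_cst w0 sG). Qed.

Lemma Hs_min h c : Hs h -> Hs (h \min cst c).
Proof.
move=> [Lh Hh]; split; first exact: (Linf_min w0 sG Lh (LGc c)).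
move=> A GA; apply: (ptrans PO (Lmi GA Lf) (Lmi GA (LGF Lh)) (Lmi GA (LGF (Linf_min w0 sG Lh (LGc c))))).
  exact: Hh.
- apply: mono; [exact: Lmi GA (LGF Lh)|exact: Lmi GA (LGF (Linf_min w0 sG Lh (LGc c)))|].
  move=> w; rewrite /= indicE; case: (_ \in _); rewrite ?mulr1 ?mulr0 // ge_min lexx //.
Qed.

Lemma Hs_cst c : (forall w, c <= f w) -> Hs (cst c).
Proof.
move=> cf; split; first exact: LGc.
move=> A GA; apply: mono; [exact: Lmi|exact: Lmi|].
by move=> w; rewrite /= indicE; case: (_ \in _); rewrite ?mulr1 ?mulr0 // /cst.
Qed.

Lemma Hs_null_gt h c : (forall w, f w <= c) -> Hs h -> null [set w | c < h w].
Proof.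
move=> fc [Lh Hh]; set B := [set w | c < h w].
have GB : G B by exact: (H_lt w0 sG (LGc c) Lh).
apply: contrapT => nB.
have s1 : pstr (h \* \1_B) (cst c \* \1_B).
  apply: (strict_mono w0 sF PO HSM HPC); [exact: Lmi (LGF Lh)|exact: Lmi|..].
    move=> w; rewrite /= indicE; case: (boolP (w \in B)) => [/set_mem /ltW|_]; rewrite ?mulr1 ?mulr0 //.
  have -> // : [set w | (cst c \* \1_B) w < (h \* \1_B) w] = B.
  apply/seteqP; split => w /=; rewrite indicE.
    by case: (boolP (w \in B)) => [/set_mem //|_]; rewrite !mulr0 ltxx.
  by move=> wB; rewrite mem_set // !mulr1.
have p1 : pref (cst c \* \1_B) (f \* \1_B).
  apply: mono; [exact: Lmi|exact: Lmi|].
  by move=> w; rewrite /= indicE; case: (_ \in _); rewrite ?mulr1 ?mulr0 // /cst.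
have [_ nn] := pstr_pref PO (Lmi GB (LGF Lh)) (Lmi GB (LCm c)) (Lmi GB Lf) s1 p1.
by apply: nn; exact: Hh.
Qed.

Lemma Hs_lim (ks : nat -> Omega -> R) g : (forall n, Hs (ks n)) -> LGg g ->
  (exists B, forall n w, `|ks n w| <= B) ->
  (forall w, (fun n => ks n w) @ \oo --> g w) -> Hs g.
Proof.
move=> Hk Lg [B hB] cv; split => // A GA.
have Lk n : L (ks n) by case: (Hk n) => /LGF.
apply: (@PC_pref2 _ _ _ _ PO HPC (fun n => ks n \* \1_A)).
- by move=> n; exact: Lmi.
- exact: Lmi GA (LGF Lg).
- exact: Lmi.
- exists B => n w; rewrite /= indicE; case: (_ \in _); rewrite ?mulr1 ?mulr0 ?normr0 //.
  exact: le_trans (normr_ge0 _) (hB n w).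
- move=> w; rewrite /= indicE; case: (_ \in _).
    have -> : (fun n => ks n w * true%:R) = (fun n => ks n w) by apply/funext => n; rewrite mulr1.
    by rewrite mulr1; exact: cv.
  have -> : (fun n => ks n w * false%:R) = (fun n => 0) by apply/funext => n; rewrite mulr0.
  by rewrite mulr0; exact: cvg_cst.
- by move=> n; case: (Hk n) => _; apply.
Qed.

End Main.

From mathcomp Require Import ring lra.

Fixpoint runmax (R : realType) (Omega : Type) (hs : nat -> Omega -> R) n : Omega -> R :=
  if n is n'.+1 then runmax hs n' \max hs n else hs 0.

Lemma harm_le (R : realType) (a b : R) : (forall n, a - n.+1%:R^-1 < b) -> a <= b.
Proof.
move=> h; rewrite leNgt; apply/negP => ba.
have e0 : 0 < a - b by rewrite subr_gt0.
have ie0 : 0 <= (a - b)^-1 by rewrite invr_ge0 ltW.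
have hb := Num.Theory.archi_boundP ie0.
set K := Num.bound _ in hb.
have hK : K.+1%:R^-1 < a - b.
  rewrite -[X in _ < X]invrK ltf_pV2 ?posrE ?ltr0n ?invr_gt0 //.
  by rewrite (lt_le_trans hb) // ler_nat.
have := h K; set t := K.+1%:R^-1 in hK *; lra.
Qed.

Section Max.
Variables (R : realType) (Omega : Type) (w0 : Omega).
Variables (F : set (set Omega)) (sF : sigma_algebra setT F).
Variables (G : set (set Omega)) (sG : sigma_algebra setT G) (GF : G `<=` F).
Variable pref : (Omega -> R) -> (Omega -> R) -> Prop.
Hypotheses (PO : preference_order F pref) (HSM : SM F pref) (HPC : PC F pref) (HST : ST F pref).
Hypothesis nT : ~ null_events F pref setT.
Variable f : Omega -> R.
Hypothesis Lf : Linf F f.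
Variable M : R.
Hypothesis hM : forall w, `|f w| <= M.
Local Notation L := (@Linf R Omega F).
Local Notation LGg := (@Linf R Omega G).
Local Notation psim := (pref_sim pref).
Local Notation pstr := (pref_strict pref).
Local Notation null := (null_events F pref).
Local Notation mono := (mono w0 sF PO HSM HPC).
Local Notation Phi := (Phi pref).
Local Notation Phi_le := (Phi_le w0 sF PO HSM HPC nT).
Local Notation Hs := (Hs G pref f).
Lemma LCn (x : R) : L (cst x). Proof. exact: LCx. Qed.
Local Hint Resolve LCn : core.

Definition HM (h : Omega -> R) := Hs h /\ forall w, - M <= h w <= M.

Lemma LHM h : HM h -> L h.
Proof. by case=> [[Lh _] _]; exact: LinfGF Lh. Qed.

Lemma Phi_HM h : HM h -> Phi h <= M.
Proof.
move=> Hh; rewrite -(Phi_cst w0 sF PO HSM HPC nT M); apply: Phi_le => //; first exact: LHM.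
apply: mono => //; first exact: LHM.
by move=> w; case: Hh => _ /(_ w) /andP[].
Qed.

Lemma HM_cst : HM (cst (- M)).
Proof.
split.
  apply: (Hs_cst w0 sF sG GF PO HSM HPC Lf) => w.
  by move: (hM w); rewrite ler_norml => /andP[].
move=> w; rewrite /cst lexx /=; have := hM w0; have := normr_ge0 (f w0); lra.
Qed.

Lemma HM_max h1 h2 : HM h1 -> HM h2 -> HM (h1 \max h2).
Proof.
move=> [H1 b1] [H2 b2]; split; first exact: (Hs_max w0 sF sG GF PO HST Lf).
move=> w; move: (b1 w) (b2 w) => /andP[a1 c1] /andP[a2 c2].
rewrite /= /Order.max; case: ifP => _; apply/andP; split => //.
Qed.

Lemma max_ex : exists g, [/\ HM g &
  forall h, HM h -> Phi h <= Phi g].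
Proof.
pose V := [set Phi h | h in HM].
have hsV : has_sup V.
  split; first by exists (Phi (cst (- M))), (cst (- M)) => //; exact: HM_cst.
  by exists M => _ [h Hh <-]; exact: Phi_HM.
set s := sup V.
have hn : forall n, exists h, HM h /\ s - n.+1%:R^-1 < Phi h.
  move=> n; have [_ [h Hh <-] lt] := sup_adherent (inv_gt0 R n) hsV.
  by exists h.
have [hs Hhs] := choice hn.
pose ks := runmax hs.
have Hk n : HM (ks n).
  elim: n => [|n IH] /=; first by case: (Hhs 0%N).
  by apply: HM_max => //; case: (Hhs n.+1).
have kge n : forall w, hs n w <= ks n w.
  by case: n => [|n] w //=; rewrite le_max lexx orbT.
have knd w : nondecreasing_seq (fun n => ks n w).
  by apply/nondecreasing_seqP => n /=; rewrite le_max lexx.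
have kub w : has_ubound (range (fun n => ks n w)).
  by exists M => _ [n _ <-]; case: (Hk n) => _ /(_ w) /andP[].
pose g w := sup (range (fun n => ks n w)).
have cvk w : (fun n => ks n w) @ \oo --> g w by exact: nondecreasing_cvgn.
have gb w : - M <= g w <= M.
  apply/andP; split.
    apply: le_trans (_ : ks 0%N w <= g w).
      by case: (Hk 0%N) => _ /(_ w) /andP[].
    by apply: sup_upper_bound; [split => //; exists (ks 0%N w), 0%N|exists 0%N].
  by apply: ge_sup; [exists (ks 0%N w), 0%N|move=> _ [n _ <-]; case: (Hk n) => _ /(_ w) /andP[]].
have gM w : `|g w| <= M by rewrite ler_norml gb.
have LGg_g : LGg g.
  apply: (Linf_lim w0 sG (fs := ks) _ gM cvk) => n; by case: (Hk n) => -[].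
have Hg : HM g.
  split => //; apply: (Hs_lim w0 sF GF PO HPC Lf (ks := ks)) => //.
  - by move=> n; case: (Hk n).
  - by exists M => n w; rewrite ler_norml; case: (Hk n) => _; apply.
have Lg : L g by exact: LHM.
have sPg : s <= Phi g.
  apply: harm_le => n; have [Hn lt] := Hhs n.
  apply: (lt_le_trans lt); apply: Phi_le => //; first exact: LHM.
  apply: mono => //; first exact: LHM.
  move=> w; apply: (le_trans (kge n w)).
  by apply: sup_upper_bound; [split => //; exists (ks 0%N w), 0%N|exists n].
exists g; split => // h Hh; apply: (le_trans _ sPg).
by apply: sup_upper_bound => //; exists h.
Qed.

End Max.

From mathcomp Require Import ring lra.

Section Fin.
Variables (R : realType) (Omega : Type) (w0 : Omega).
Variables (F : set (set Omega)) (sF : sigma_algebra setT F).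
Variables (G : set (set Omega)) (sG : sigma_algebra setT G) (GF : G `<=` F).
Variable pref : (Omega -> R) -> (Omega -> R) -> Prop.
Hypotheses (PO : preference_order F pref) (HSM : SM F pref) (HPC : PC F pref) (HST : ST F pref).
Hypothesis nT : ~ null_events F pref setT.
Variable f : Omega -> R.
Hypothesis Lf : Linf F f.
Variable M : R.
Hypothesis hM : forall w, `|f w| <= M.
Local Notation L := (@Linf R Omega F).
Local Notation LGg := (@Linf R Omega G).
Local Notation psim := (pref_sim pref).
Local Notation pstr := (pref_strict pref).
Local Notation null := (null_events F pref).
Local Notation mono := (mono w0 sF PO HSM HPC).
Local Notation Phi := (Phi pref).
Local Notation Phi_le := (Phi_le w0 sF PO HSM HPC nT).
Local Notation Phi_lt := (Phi_lt w0 sF PO HSM HPC).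
Local Notation Hs := (Hs G pref f).
Local Notation HM := (HM G pref f M).
Lemma LCo (x : R) : L (cst x). Proof. exact: LCx. Qed.
Local Hint Resolve LCo : core.
Lemma LGo (x : R) : LGg (cst x). Proof. exact: (Linf_cst w0 sG). Qed.
Local Hint Resolve LGo : core.

Lemma M0 : 0 <= M. Proof. exact: le_trans (normr_ge0 _) (hM w0). Qed.
Lemma fM w : f w <= M. Proof. by move: (hM w); rewrite ler_norml => /andP[]. Qed.

Variable g : Omega -> R.
Hypotheses (Hg : HM g) (gmax : forall h, HM h -> Phi h <= Phi g).

Lemma LGg_g : LGg g. Proof. by case: Hg => -[]. Qed.
Lemma Lg : L g. Proof. exact: LinfGF LGg_g. Qed.

Lemma key e A' : 0 < e -> G A' -> ~ null A' -> ~ Hs (glue (g \+ cst e) A' g).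
Proof.
move=> e0 GA' nA' Hh.
set h := glue (g \+ cst e) A' g.
have LGh : LGg h by apply: (Linf_glue w0 sG) => //; [exact: (Linf_D w0 sG LGg_g)|exact: LGg_g].
set h' := h \min cst M.
have Hh' : Hs h' := Hs_min w0 sF sG GF PO HSM HPC Lf M Hh.
have gh w : g w <= h w by rewrite /h glueE; case: (_ \in _) => //=; rewrite lerDl ltW.
have gb w : - M <= g w <= M by case: Hg => _; apply.
have HMh' : HM h'.
  split => // w; rewrite /h' /= ge_min lexx orbT andbT le_min.
  move: (gb w) (gh w) M0 => /andP[? ?] ? ?; apply/andP; split; lra.
have Lh' : L h' by exact: LHM HMh'.
have gh' w : g w <= h' w by rewrite /h' /= le_min gh; case/andP: (gb w).
have N1 : null [set w | g w < h' w].
  apply: contrapT => nN.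
  have := Phi_lt Lh' Lg (strict_mono w0 sF PO HSM HPC Lh' Lg gh' nN).
  by rewrite ltNge gmax.
have N2 : null [set w | M < h w] := Hs_null_gt w0 sF sG GF PO HSM HPC Lf fM Hh.
apply: nA'; apply: (null_sub w0 sF (null_U2 w0 sF PO N1 N2) (GF GA')).
move=> w wA; have [gM|Mg] := ltP (g w) M.
  left => /=; rewrite /h' /= lt_min gM andbT /h glueE mem_set //=; lra.
right => /=; rewrite /h glueE mem_set //=; lra.
Qed.

Lemma Lge e : L (g \+ cst e). Proof. exact: (Linf_D w0 sF Lg). Qed.

Lemma eps_step e A : 0 < e -> G A -> pref ((g \+ cst e) \* \1_A) (f \* \1_A).
Proof.
move=> e0 GA.
pose K := [set B | G B /\ pref ((g \+ cst e) \* \1_B) (f \* \1_B)].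
have K0 : K set0.
  split; first exact: (H_0 w0 sG).
  have E (k : Omega -> R) : k \* \1_set0 = cst 0 by apply/funext => w; rewrite /= indicE in_set0 mulr0.
  by rewrite !E; exact: (prefl PO).
have [U [[GU KU] UA nAU]] : exists U, [/\ K U, U `<=` A & null (A `\` U)].
  apply: (exhaust w0 sF PO HSM HPC nT sG GF (K := K)) => //.
  - by move=> B [].
  - move=> Bs KB dB; split.
      by apply: (H_bigcup w0 sG) => n; case: (KB n).
    apply: (addcount w0 sF PO HPC HST) => //.
    + by move=> n; case: (KB n) => /GF.
    + exact: Lge.
    + by move=> n; case: (KB n).
  - move=> A' GA' A'A nA'.
    have nH := key e0 GA' nA'.
    set h := glue (g \+ cst e) A' g in nH.
    have LGh : LGg h by apply: (Linf_glue w0 sG) => //; [exact: (Linf_D w0 sG LGg_g)|exact: LGg_g].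
    have [B [GB nB]] : exists B, G B /\ ~ pref (f \* \1_B) (h \* \1_B).
      apply: contrapT => hn; apply: nH; split => // B GB; apply: contrapT => nB.
      by apply: hn; exists B.
    set B' := B `&` A'.
    have GB' : G B' by exact: (H_I w0 sG).
    have Lh : L h by exact: LinfGF LGh.
    have np : ~ pref (f \* \1_B') ((g \+ cst e) \* \1_B').
      move=> p; apply: nB.
      have eB : B = B' `|` (B `\` A').
        apply/seteqP; split => w.
        - by move=> wB; have [wA|wA] := pselect (A' w); [left|right].
        - by case=> -[].
      have e1 : h \* \1_B' = (g \+ cst e) \* \1_B'.
        apply/funext => w; rewrite /= !indicE /h glueE.
        by case: (boolP (w \in B')) => [/set_mem [_ wA]|_]; rewrite ?(mem_set wA) ?mulr0.
      have e2 : h \* \1_(B `\` A') = g \* \1_(B `\` A').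
        apply/funext => w; rewrite /= !indicE /h glueE.
        case: (boolP (w \in B `\` A')) => [/set_mem [_ wA]|_]; rewrite ?mulr0 //.
        by rewrite memNset.
      rewrite eB; apply: (add2 w0 sF PO HST) => //.
      + exact: GF.
      + exact: GF (H_D w0 sG GB GA').
      + by apply/seteqP; split => // w [[_ ?] [_ ?]].
      + by rewrite e1.
      + by rewrite e2; case: Hg => -[_ HH] _; apply: HH; exact: (H_D w0 sG).
    have Lfi : L (f \* \1_B') by exact: (Lmi w0 sF GF GB' Lf).
    have Lgi : L ((g \+ cst e) \* \1_B') by exact: (Lmi w0 sF GF GB' (Lge e)).
    exists B'; split.
    + split => //; exact: (pcompl PO Lfi Lgi np).
    + by move=> w [].
    + move=> nulB; apply: np.
      have s1 := null_glue nulB Lf (LCo 0).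
      have s2 := null_glue nulB (Lge e) (LCo 0).
      rewrite !(mulindE).
      exact: (ptrans PO (LG w0 sF (GF GB') Lf (LCo 0)) (LCo 0) (LG w0 sF (GF GB') (Lge e) (LCo 0)) s1.1 s2.2).
have UE (k : Omega -> R) : k \* \1_A = glue (k \* \1_A) (A `\` U) (k \* \1_U).
  apply/funext => w; rewrite glueE /= !indicE.
  case: (boolP (w \in A `\` U)) => [|/negP nAU']; first by move=> /set_mem [/mem_set -> _].
  case: (boolP (w \in U)) => [/set_mem wU|/negP wU]; first by rewrite mem_set //; exact: UA.
  case: (boolP (w \in A)) => [/set_mem wA|//]; exfalso; apply: nAU'; apply/mem_set; split => //.
  by move=> /mem_set.
have FAU : F (A `\` U) by apply: GF; exact: (H_D w0 sG).
have La := Lmi w0 sF GF GA (Lge e).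
have Lb := Lmi w0 sF GF GU (Lge e).
have Lc := Lmi w0 sF GF GU Lf.
have Ld := Lmi w0 sF GF GA Lf.
apply: (ptrans PO La Lb Ld); first by rewrite [X in pref X _]UE; exact: (null_glue nAU La Lb).1.
apply: (ptrans PO Lb Lc Ld) => //.
by rewrite [X in pref _ X]UE; exact: (null_glue nAU Ld Lc).2.
Qed.

End Fin.

From mathcomp Require Import ring lra.

Section Fin2.
Variables (R : realType) (Omega : Type) (w0 : Omega).
Variables (F : set (set Omega)) (sF : sigma_algebra setT F).
Variables (G : set (set Omega)) (sG : sigma_algebra setT G) (GF : G `<=` F).
Variable pref : (Omega -> R) -> (Omega -> R) -> Prop.
Hypotheses (PO : preference_order F pref) (HSM : SM F pref) (HPC : PC F pref) (HST : ST F pref).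
Variable f : Omega -> R.
Hypothesis Lf : Linf F f.
Local Notation L := (@Linf R Omega F).
Local Notation LGg := (@Linf R Omega G).
Local Notation psim := (pref_sim pref).
Local Notation pstr := (pref_strict pref).
Local Notation null := (null_events F pref).
Lemma LCp (x : R) : L (cst x). Proof. exact: LCx. Qed.
Local Hint Resolve LCp : core.

Lemma exists_mean : ~ null setT -> chisini_mean pref f G !=set0.
Proof.
move=> nT; have [M hM] := Linf_bound Lf.
have [g [Hg gmax]] := max_ex w0 sF sG GF PO HSM HPC HST nT Lf hM.
have LGg_g : LGg g by case: Hg => -[].
have Lg : L g by exact: LinfGF LGg_g.
exists g; split => // A GA; split; first by case: Hg => -[_ HH] _; exact: HH.
have Lge e : L (g \+ cst e) by exact: (Linf_D w0 sF Lg).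
apply: (PC_pref PO HPC (fs := fun n => (g \+ cst n.+1%:R^-1) \* \1_A)).
- by move=> n; exact: (Lmi w0 sF GF GA (Lge _)).
- exact: (Lmi w0 sF GF GA Lg).
- exact: (Lmi w0 sF GF GA Lf).
- exists (M + 1) => n w; rewrite /= indicE; case: (_ \in _); rewrite ?mulr1 ?mulr0 ?normr0.
    case: Hg => _ /(_ w) /andP[a b]; have := inv_le1 R n; have := inv_gt0 R n.
    set t := _^-1; move=> ? ?; rewrite ler_norml; apply/andP; split; lra.
  have := normr_ge0 (f w0); have := hM w0; lra.
- move=> w; rewrite /= indicE; case: (_ \in _).
    have -> : (fun n => (g w + n.+1%:R^-1) * true%:R) = (fun n => g w + 1 * n.+1%:R^-1).
      by apply/funext => n; rewrite mulr1 mul1r.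
    by rewrite mulr1; exact: cvg_cst_inv.
  have -> : (fun n => (g w + n.+1%:R^-1) * false%:R) = (fun n => 0) by apply/funext => n; rewrite mulr0.
  by rewrite mulr0; exact: cvg_cst.
- move=> n; exact: (eps_step w0 sF sG GF PO HSM HPC HST nT Lf hM Hg gmax (inv_gt0 R n) GA).
Qed.

Lemma null_lt_mean g g' : chisini_mean pref f G g -> chisini_mean pref f G g' ->
  null [set w | g' w < g w].
Proof.
move=> [Lg Hg] [Lg' Hg']; set B := [set w | g' w < g w].
have GB : G B by exact: (H_lt w0 sG).
apply: contrapT => nB.
have L1 := Lmi w0 sF GF GB (LinfGF GF Lg).
have L2 := Lmi w0 sF GF GB (LinfGF GF Lg').
have L3 := Lmi w0 sF GF GB Lf.
have s1 : pstr (g \* \1_B) (g' \* \1_B).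
  apply: (strict_mono w0 sF PO HSM HPC L1 L2).
    move=> w; rewrite /= indicE; case: (boolP (w \in B)) => [/set_mem /ltW|_]; rewrite ?mulr1 ?mulr0 //.
  have -> // : [set w | (g' \* \1_B) w < (g \* \1_B) w] = B.
  apply/seteqP; split => w /=; rewrite indicE.
    by case: (boolP (w \in B)) => [/set_mem //|_]; rewrite !mulr0 ltxx.
  by move=> wB; rewrite mem_set // !mulr1.
apply: s1.2; apply: (ptrans PO L2 L3 L1); [exact: (Hg' B GB).2|exact: (Hg B GB).1].
Qed.

Lemma uniq_mean g g' : chisini_mean pref f G g -> chisini_mean pref f G g' ->
  null [set w | g w != g' w].
Proof.
move=> cg cg'.
have -> : [set w | g w != g' w] = [set w | g' w < g w] `|` [set w | g w < g' w].
  apply/seteqP; split => w /=.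
  - by rewrite neq_lt => /orP[h|h]; [right|left].
  - by case=> h; rewrite neq_lt h ?orbT.
apply: (null_U2 w0 sF PO); [exact: null_lt_mean|exact: null_lt_mean].
Qed.

End Fin2.


Lemma empty_Linf (R : realType) (Omega : Type) (H : set (set Omega)) (h : Omega -> R) :
  sigma_algebra setT H -> ~ (exists w : Omega, True) -> Linf H h.
Proof.
move=> [H0 _ _] nO; split.
  move=> B _; have -> : h @^-1` B = set0 => //.
  by apply/seteqP; split => w //= _; exfalso; apply: nO; exists w.
by exists 0 => w; exfalso; apply: nO; exists w.
Qed.

Theorem mainTheorem6 (R : realType) (Omega : Type)
  (F G : set (set Omega)) (pref : (Omega -> R) -> (Omega -> R) -> Prop)
  (f : Omega -> R) :
  sigma_algebra setT F ->
  sigma_algebra setT G -> G `<=` F ->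
  preference_order F pref -> SM F pref -> PC F pref -> ST F pref ->
  Linf F f ->
  chisini_mean pref f G !=set0 /\
  (forall g g', chisini_mean pref f G g -> chisini_mean pref f G g' ->
     null_events F pref [set w | g w != g' w]).
Proof.
move=> sF sG GF PO HSM HPC HST Lf.
have [[w0 _]|nO] := pselect (exists w : Omega, True); last first.
  have feq (a b : Omega -> R) : a = b.
    by apply/funext => w; exfalso; apply: nO; exists w.
  split.
    exists (cst 0); split; first exact: empty_Linf.
    move=> A GA; rewrite (feq (f \* \1_A) (cst 0 \* \1_A)).
    by split; apply: (prefl PO); exact: empty_Linf.
  move=> g g' _ _; split.
    have -> : [set w | g w != g' w] = set0.
      by apply/seteqP; split => w //= _; exfalso; apply: nO; exists w.
    by case: sF.
  move=> a b La Lb; rewrite (feq (glue a _ b) b); split; exact: (prefl PO).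
have [nTT|nT] := pselect (null_events F pref setT).
  have sim a b : Linf F a -> Linf F b -> pref_sim pref a b.
    move=> La Lb; have := null_glue nTT La Lb.
    have -> // : glue a setT b = a by apply/funext => w; rewrite glueE in_setT.
  split.
    exists (cst 0); split; first exact: (Linf_cst w0 sG).
    move=> A GA; apply: sim.
    - exact: (Lmi w0 sF GF GA Lf).
    - exact: (Lmi w0 sF GF GA (LCx w0 sF 0)).
  move=> g g' [Lg _] [Lg' _].
  apply: (null_sub w0 sF nTT) => //.
  exact: GF (H_neq w0 sG Lg Lg').
split; first exact: (exists_mean w0 sF sG GF PO HSM HPC HST Lf nT).
move=> g g'; exact: (uniq_mean w0 sF sG GF PO HSM HPC Lf).
Qed.
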